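(* Let $p$ be an odd prime, let $q\in\mathbb{C}_p$ with $|1-q|_p<1$, let $h\in\mathbb{Z}$, $r\in\mathbb{N}$, and let $w_1,w_2\in\mathbb{N}$ with $w_1\equiv 1\pmod 2$ and $w_2\equiv 1\pmod 2$. Then, for $x\in\mathbb{Z}_p$, \[ \begin{split} &\sum_{j_1,\dots,j_r=0}^{w_1-1}(-1)^{\sum_{l=1}^r j_l}\,q^{w_2\sum_{l=1}^r(h-l)j_l}\int_{\mathbb{Z}_p}\!\cdots\!\int_{\mathbb{Z}_p} q^{w_1\sum_{l=1}^r(h-l)y_l}\, e^{[w_1]_q\left[w_2x+\frac{w_2}{w_1}\sum_{l=1}^r j_l+\sum_{l=1}^r y_l\right]_{q^{w_1}}t}\,d\mu_{-1}(y_1)\cdots d\mu_{-1}(y_r)\\ &=\sum_{j_1,\dots,j_r=0}^{w_2-1}(-1)^{\sum_{l=1}^r j_l}\,q^{w_1\sum_{l=1}^r(h-l)j_l}\int_{\mathbb{Z}_p}\!\cdots\!\int_{\mathbb{Z}_p} q^{w_2\sum_{l=1}^r(h-l)y_l}\, e^{[w_2]_q\left[w_1x+\frac{w_1}{w_2}\sum_{l=1}^r j_l+\sum_{l=1}^r y_l\right]_{q^{w_2}}t}\,d\mu_{-1}(y_1)\cdots d\mu_{-1}(y_r). \end{split} \]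
   Context: $\mathbb{Z}_p$ denotes the $p$-adic integers and $\mathbb{C}_p$ the completion of the algebraic closure of $\mathbb{Q}_p$. For $q\in\mathbb{C}_p$ with $|1-q|_p<1$, the $q$-number is $[x]_q=\frac{1-q^x}{1-q}$; for $w\in\mathbb{N}$, $[z]_{q^w}=\frac{1-q^{wz}}{1-q^w}$ (in all occurrences the exponent $wz$ is a $p$-adic integer). For a continuous function $f$ on $\mathbb{Z}_p$, the $p$-adic fermionic integral is $\int_{\mathbb{Z}_p}f(y)\,d\mu_{-1}(y)=\lim_{N\to\infty}\sum_{y=0}^{p^N-1}f(y)(-1)^y$, and the multivariate integral $\int_{\mathbb{Z}_p}\cdots\int_{\mathbb{Z}_p}\,d\mu_{-1}(y_1)\cdots d\mu_{-1}(y_r)$ is the iterated fermionic integral in the variables $y_1,\dots,y_r$. The identity is between formal power series in $t$ (equivalently, coefficientwise in $t$). *)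

(* Defs.v *)
From HB Require Import structures.
From mathcomp Require Import all_boot all_order all_algebra.
From mathcomp Require Import reals.
From Stdlib Require Import ClassicalEpsilon.
Set Implicit Arguments. Unset Strict Implicit. Unset Printing Implicit Defensive.
Import Order.TTheory GRing.Theory Num.Theory.
Local Open Scope ring_scope.

Section PadicSetting.
Variables (R : realType) (K : fieldType) (abs : K -> R).

Definition cvgK (u : nat -> K) (l : K) : Prop :=
  forall e : R, 0 < e -> exists N : nat, forall n : nat, (N <= n)%N -> abs (u n - l) < e.

Definition cauchyK (u : nat -> K) : Prop :=
  forall e : R, 0 < e -> exists N : nat,
    forall m n : nat, (N <= m)%N -> (N <= n)%N -> abs (u m - u n) < e.

(* abs is a complete non-archimedean absolute value on the characteristic-0
   field K with |p| < 1 ; such a K is a complete extension of Q_p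
   (C_p is an instance). *)
Definition padic_abs (p : nat) : Prop :=
  [pchar K] =i pred0
  /\ (forall x : K, 0 <= abs x)
  /\ (forall x : K, abs x = 0 <-> x = 0)
  /\ (forall x y : K, abs (x * y) = abs x * abs y)
  /\ (forall x y : K, abs (x + y) <= Num.max (abs x) (abs y))
  /\ abs (p%:R) < 1
  /\ (forall u : nat -> K, cauchyK u -> exists l, cvgK u l).

Definition in_Zp (x : K) : Prop :=
  exists u : nat -> int, cvgK (fun k => (u k)%:~R) x.

Definition is_qpow (q x y : K) : Prop :=
  forall u : nat -> int, cvgK (fun k => (u k)%:~R) x -> cvgK (fun k => q ^ (u k)) y.

Definition qpow (q x : K) : K := epsilon (inhabits 0) (is_qpow q x).

(* q-numbers: [x]_q = (1 - q^x)/(1 - q), and [z]_{q^w} = (1 - q^(w z))/(1 - q^w). *)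
Definition qnum (q x : K) : K := (1 - qpow q x) / (1 - q).
Definition qnumw (q : K) (w : nat) (z : K) : K :=
  (1 - qpow q (w%:R * z)) / (1 - q ^+ w).

(* p-adic fermionic integral: lim_N sum_{y=0}^{p^N-1} f(y) (-1)^y
   (only the values of f at the integers y enter the definition). *)
Definition fint (p : nat) (f : nat -> K) : K :=
  epsilon (inhabits 0)
    (cvgK (fun N => \sum_(y < p ^ N) f y * (-1) ^+ y)).

(* Iterated fermionic integral in the variables ys 0, ..., ys (r-1)
   (ys i stands for y_(i+1)); y_1 is innermost, y_r outermost. *)
Fixpoint fintn (p : nat) (r : nat) (F : (nat -> nat) -> K) : K :=
  match r with
  | 0 => F (fun _ => 0%N)
  | r'.+1 => fint p (fun y =>
      fintn p r' (fun ys => F (fun l => if l == r' then y else ys l)))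
  end.

End PadicSetting.

(* Coefficient of t^n/... : the coefficient of t^n of the side of the identity,
   i.e. sum_j (-1)^(sum j) q^(w' sum (h-l) j_l)
        int ... int q^(w sum (h-l) y_l) ([w]_q [w' x + (w'/w) sum j + sum y]_{q^w})^n / n!  *)
Definition side_coef (R : realType) (K : fieldType) (abs : K -> R)
    (p : nat) (q : K) (h : int) (r w w' : nat) (x : K) (n : nat) : K :=
  \sum_(j : {ffun 'I_r -> 'I_w})
    ((-1) ^+ (\sum_(i < r) (j i : nat))
     * q ^ ((w' : int) * (\sum_(i < r) (h - (i.+1 : int)) * (j i : int)))
     * fintn abs p r (fun ys =>
         qpow abs q (w%:R * (\sum_(i < r) (h - (i.+1 : int))%:~R * (ys i)%:R))
         * (qnum abs q (w%:R) *
            qnumw abs q w (w'%:R * x + (w'%:R / w%:R) * (\sum_(i < r) ((j i : nat)%:R))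
                           + (\sum_(i < r) (ys i)%:R))) ^+ n
         / (n`!)%:R)).

(* Main.v *)
Require Import Defs.
From HB Require Import structures.
From mathcomp Require Import all_boot all_order all_algebra.
From mathcomp Require Import reals.
From mathcomp Require Import ring lra.
From Stdlib Require Import ClassicalEpsilon FunctionalExtensionality.
Set Implicit Arguments. Unset Strict Implicit. Unset Printing Implicit Defensive.
Import Order.TTheory GRing.Theory Num.Theory.
Local Open Scope ring_scope.

Section Basics.
Variables (R : realType) (K : fieldType) (abs : K -> R).
Hypothesis ge0 : forall x, 0 <= abs x.
Hypothesis eq0 : forall x, abs x = 0 <-> x = 0.
Hypothesis absM : forall x y, abs (x*y) = abs x * abs y.
Hypothesis absD : forall x y, abs (x+y) <= Num.max (abs x) (abs y).

Lemma abs1 : abs 1 = 1.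
Proof.
have h := absM 1 1; rewrite mulr1 in h.
have nz : abs 1 != 0 by apply/eqP => /eq0 /eqP; rewrite oner_eq0.
have : abs 1 * (abs 1 - 1) = 0 by rewrite mulrBr mulr1 -h subrr.
by move/eqP; rewrite mulf_eq0 (negbTE nz) /= subr_eq0 => /eqP.
Qed.

Lemma absN1 : abs (-1) = 1.
Proof.
have h := absM (-1) (-1); rewrite mulrNN mulr1 abs1 in h.
have := ge0 (-1); set a := abs (-1) in h *.
move=> ha; nra.
Qed.

Lemma absN x : abs (- x) = abs x.
Proof. by rewrite -mulN1r absM absN1 mul1r. Qed.

Lemma absB x y : abs (x - y) = abs (y - x).
Proof. by rewrite -absN opprB. Qed.

Lemma absD_le x y e : abs x <= e -> abs y <= e -> abs (x + y) <= e.
Proof. move=> hx hy; apply: le_trans (absD x y) _; by rewrite ge_max hx hy. Qed.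

Lemma absD_lt x y e : abs x < e -> abs y < e -> abs (x + y) < e.
Proof. move=> hx hy; apply: le_lt_trans (absD x y) _; by rewrite gt_max hx hy. Qed.

Lemma abs_sum_le (I : Type) (s : seq I) (F : I -> K) e :
  0 <= e -> (forall i, abs (F i) <= e) -> abs (\sum_(i <- s) F i) <= e.
Proof.
move=> he hF; elim: s => [|a s IH]; first by rewrite big_nil (proj2 (eq0 0) erefl).
by rewrite big_cons; apply: absD_le.
Qed.

Lemma abs_natr n : abs n%:R <= 1.
Proof.
elim: n => [|n IH]; first by rewrite (proj2 (eq0 0) erefl).
by rewrite -addn1 natrD; apply: absD_le => //; rewrite abs1.
Qed.

Lemma abs_intr (m : int) : abs m%:~R <= 1.
Proof. case: m => n; first exact: abs_natr. by rewrite NegzE rmorphN /= absN abs_natr. Qed.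

Lemma abs_strict x y : abs y < abs x -> abs (x + y) = abs x.
Proof.
move=> h; apply/le_anti/andP; split.
  apply: le_trans (absD x y) _; rewrite ge_max lexx; exact: ltW.
have e : x = (x + y) + (- y) by rewrite addrK.
have := absD (x + y) (-y); rewrite -e absN.
rewrite le_max => /orP [//|c]; by move: (lt_le_trans h c); rewrite ltxx.
Qed.

Lemma absX x n : abs (x ^+ n) = abs x ^+ n.
Proof. elim: n => [|n IH]; first by rewrite !expr0 abs1. by rewrite !exprS absM IH. Qed.

Lemma absV x : x != 0 -> abs (x^-1) = (abs x)^-1.
Proof.
move=> nz; have h := absM x x^-1; rewrite mulfV // abs1 in h.
have ax : abs x != 0 by apply/eqP => /eq0 /eqP; rewrite (negbTE nz).
by rewrite -[abs x^-1]mul1r -(mulVf ax) -mulrA -h mulr1.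
Qed.

Lemma abs_ltP (a b : K) : (forall e : R, 0 < e -> abs (a - b) < e) -> a = b.
Proof.
move=> h; apply/eqP; rewrite -subr_eq0; apply/eqP; apply/eq0.
have := ge0 (a - b); rewrite le_eqVlt => /orP [/eqP -> //|/h]; by rewrite ltxx.
Qed.

Lemma absz1_pow z n : abs z = 1 -> abs (z ^+ n - 1) <= abs (z - 1).
Proof.
move=> hz; elim: n => [|n IH]; first by rewrite expr0 subrr (proj2 (eq0 0) erefl).
have -> : z ^+ n.+1 - 1 = (z ^+ n - 1) * z + (z - 1) by rewrite exprSr; ring.
by apply: absD_le => //; rewrite absM hz mulr1.
Qed.

Lemma absz1_powz z (m : int) : abs z = 1 -> abs (z ^ m - 1) <= abs (z - 1).
Proof.
move=> hz; case: m => n; first by rewrite -exprnP; exact: absz1_pow.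
have nz : z ^+ n.+1 != 0 by rewrite expf_neq0 //; apply/eqP => e; move: hz; rewrite e (proj2 (eq0 0) erefl); move/eqP; rewrite eq_sym oner_eq0.
rewrite NegzE -exprnN.
have -> : (z ^+ n.+1)^-1 - 1 = - ((z ^+ n.+1 - 1) * (z ^+ n.+1)^-1).
  by rewrite mulrBl mulfV // mul1r opprB.
by rewrite absN absM absV // absX hz expr1n invr1 mulr1 absz1_pow.
Qed.

Lemma absz1_abs z (m : int) : abs z = 1 -> abs (z ^ m) = 1.
Proof.
move=> hz; case: m => n; first by rewrite -exprnP absX hz expr1n.
have nz : z != 0 by apply/eqP => e; move: hz; rewrite e (proj2 (eq0 0) erefl); move/eqP; rewrite eq_sym oner_eq0.
by rewrite NegzE -exprnN absV ?expf_neq0 // absX hz expr1n invr1.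
Qed.


Lemma lerX_mono (a b : R) n : 0 <= a -> a <= b -> a ^+ n <= b ^+ n.
Proof.
move=> a0 ab; elim: n => [|n IH]; first by rewrite !expr0.
rewrite !exprS; apply: ler_pM => //; exact: exprn_ge0.
Qed.

Lemma geo (c e : R) : 0 <= c -> c < 1 -> 0 < e -> exists N, c ^+ N < e.
Proof.
move=> c0 c1 e0; case: (eqVneq c 0) => [->|cn0]; first by exists 1%N; rewrite expr1.
have cp : 0 < c by rewrite lt_def cn0 c0.
set t := c^-1 - 1.
have tp : 0 < t by rewrite /t subr_gt0 invf_gt1.
have bern : forall N : nat, 1 + N%:R * t <= (1 + t) ^+ N.
  elim=> [|N IH]; first by rewrite mul0r addr0 expr0.
  rewrite exprS -natr1.
  have h1 : 0 <= N%:R * t by rewrite mulr_ge0 // ltW.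
  have : (1 + t) * (1 + N%:R * t) <= (1 + t) * (1 + t) ^+ N.
    by rewrite ler_pM2l // ltr_wpDr // ltW.
  apply: le_trans; nra.
have ep : 0 <= e^-1 / t by rewrite divr_ge0 // ltW // invr_gt0.
exists (Num.Def.archi_bound (e^-1 / t)).
set N := Num.Def.archi_bound _.
have hN := archi_boundP ep; rewrite -/N in hN.
have : e^-1 < (1 + t) ^+ N.
  apply: lt_le_trans (bern N); rewrite ltr_pwDl //.
  have -> : e^-1 = (e^-1/t) * t by rewrite divfK // gt_eqF.
  by rewrite (ler_pM2r tp) ltW.
have -> : 1 + t = c^-1 by rewrite /t addrC subrK.
rewrite exprVn => h.
have pe : e \in Num.pos by rewrite posrE.
have pc : c ^+ N \in Num.pos by rewrite posrE exprn_gt0.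
by rewrite -(ltf_pV2 pe pc).
Qed.

Variable p : nat.
Hypothesis pprime : prime p.
Hypothesis podd : odd p.
Hypothesis Hchar : [pchar K] =i pred0.
Hypothesis absp : abs p%:R < 1.

Lemma natr_neq0 n : ((n%:R : K) != 0) = (n != 0)%N.
Proof. by rewrite ((pcharf0P K).1 Hchar n). Qed.

Lemma absp_gt0 : 0 < abs p%:R.
Proof.
rewrite lt_def ge0 andbT; apply/eqP => /eq0 /eqP.
by rewrite ((pcharf0P K).1 Hchar p) => /eqP e; move: pprime; rewrite e.
Qed.

Lemma abs_unit (n : int) : ~~ ((p:int) %| n)%Z -> abs n%:~R = 1.
Proof.
move=> nd.
have hc : coprime p `|n|%N by rewrite prime_coprime //; move: nd; rewrite dvdzE.
have [u [v e]] := Bezoutz p n; rewrite /gcdz /= (eqP hc) in e.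
have E : (1 : K) = u%:~R * p%:R + v%:~R * n%:~R.
  by rewrite -[p%:R]/((p:int)%:~R) -!intrM -intrD e.
apply/le_anti; rewrite abs_intr /= leNgt; apply/negP => hn.
have : abs (1:K) < 1.
  rewrite E; apply: absD_lt; rewrite absM.
    by apply: (le_lt_trans _ absp); apply: ler_piMl => //; exact: abs_intr.
  by apply: (le_lt_trans _ hn); apply: ler_piMl => //; exact: abs_intr.
by rewrite abs1 ltxx.
Qed.

Lemma abs2 : abs (2 : K) = 1.
Proof.
have -> : (2 : K) = (2 : int)%:~R by [].
apply: abs_unit; rewrite dvdzE /=; apply/negP => /(dvdn_leq (isT : (0 < 2)%N)) hle.
have := prime_gt1 pprime => hgt.
have : p = 2%N by apply/eqP; rewrite eqn_leq hle.
by move=> e; move: podd; rewrite e.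
Qed.

Lemma small_div M (m : int) :
  abs m%:~R < abs (p%:R) ^+ M -> ((p:int) ^+ M %| m)%Z.
Proof.
elim: M m => [|M IH] m hm; first by rewrite expr0 dvd1z.
have hp := absp_gt0.
have : abs m%:~R < abs (p%:R) ^+ M.
  apply: lt_le_trans hm _; rewrite exprSr ger_pMr ?exprn_gt0 //; exact: ltW.
move/IH => /dvdzP [k ek].
have eabs : abs m%:~R = abs k%:~R * abs (p%:R) ^+ M.
  by rewrite ek intrM absM rmorphXn /= absX.
have hk : abs k%:~R < abs p%:R.
  rewrite eabs exprSr [_ * abs _]mulrC in hm.
  by rewrite -(ltr_pM2r (exprn_gt0 M hp)).
have : ((p:int) %| k)%Z.
  apply/negPn/negP => /abs_unit e1; move: hk; rewrite e1 => /(lt_trans absp); by rewrite ltxx.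
move=> pk; rewrite ek exprSr mulrC; exact: dvdz_mul.
Qed.

Lemma step_bound (w : K) d : abs (w - 1) <= d -> 0 <= d -> d <= 1 ->
  abs (w ^+ p - 1) <= Num.max (abs p%:R * d) (d ^+ p).
Proof.
move=> hw d0 d1.
have -> : w = (w - 1) + 1 by rewrite subrK.
rewrite exprD1n big_ord_recl /= expr0 bin0 mulr1n addrC addKr.
set x := w - 1 in hw *.
apply: abs_sum_le => [|i]; first by rewrite le_max mulr_ge0 //.
have hx : abs (x ^+ i.+1) <= d ^+ i.+1 by rewrite absX; apply: lerX_mono.
case: (ltngtP i.+1 p) => hi.
- have /dvdnP [k ek] : (p %| 'C(p, i.+1))%N by apply: prime_dvd_bin => //; apply/andP.
  rewrite le_max; apply/orP; left.
  rewrite -mulr_natr ek natrM absM mulrC; apply: ler_pM => //.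
    by rewrite absM ler_piMl // abs_natr.
  apply: le_trans hx _; rewrite exprS ler_piMr //; exact: exprn_ile1.
- by have := leq_trans hi (ltn_ord i); rewrite ltnn.
- rewrite -[bump 0 i]/(i.+1) hi binn mulr1n le_max; apply/orP; right; by rewrite -hi.
Qed.

Lemma pow_small (z : K) : abs z = 1 -> abs (z - 1) < 1 ->
  forall e : R, 0 < e -> exists N, forall n, (N <= n)%N -> abs (z ^+ (p ^ n) - 1) < e.
Proof.
move=> hz1 hz e he.
set e0 := abs (z - 1).
set c := Num.max (abs p%:R) (e0 ^+ p.-1).
have hp1 : (1 < p)%N by exact: prime_gt1.
have c0 : 0 <= c by rewrite le_max ge0.
have c1 : c < 1.
  rewrite gt_max absp /= exprn_ilt1 ?ge0 //; by move: hp1; case: (p) => [|[|n]].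
have key : forall N, abs (z ^+ (p ^ N) - 1) <= c ^+ N * e0.
  elim=> [|N IH]; first by rewrite expn0 expr1 expr0 mul1r.
  have dle : c ^+ N * e0 <= e0 by rewrite ler_piMl ?ge0 // exprn_ile1 // ltW.
  have d0 : 0 <= c ^+ N * e0 by rewrite mulr_ge0 ?exprn_ge0 ?ge0.
  rewrite expnSr exprM.
  apply: le_trans (step_bound IH d0 (le_trans dle (ltW hz))) _.
  rewrite ge_max; apply/andP; split.
    have h1 : abs p%:R <= c by rewrite le_max lexx.
    rewrite exprSr; nra.
  have h2 : (c ^+ N * e0) ^+ p.-1 <= c.
    apply: le_trans (lerX_mono _ d0 dle) _; by rewrite le_max lexx orbT.
  have -> : (c ^+ N * e0) ^+ p = (c ^+ N * e0) ^+ p.-1 * (c ^+ N * e0).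
    by rewrite -exprSr prednK // prime_gt0.
  rewrite exprSr; nra.
have [N hN] := geo c0 c1 he.
exists N => n hn.
have hzN : abs (z ^+ (p ^ N)) = 1 by rewrite absX hz1 expr1n.
have -> : z ^+ (p ^ n) = (z ^+ (p ^ N)) ^+ (p ^ (n - N)).
  by rewrite -exprM -expnD subnKC.
apply: le_lt_trans (absz1_pow _ hzN) _.
apply: le_lt_trans (key N) _.
apply: le_lt_trans hN; rewrite ler_piMr ?exprn_ge0 //; exact: ltW.
Qed.

Lemma PoszX' (a M : nat) : ((a ^ M)%N : int) = (a:int) ^+ M.
Proof. by elim: M => // M IH; rewrite expnS exprS PoszM IH. Qed.

Lemma cvgK_unique u l l' : cvgK abs u l -> cvgK abs u l' -> l = l'.
Proof.
move=> h1 h2; apply: abs_ltP => e he.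
have [N1 H1] := h1 e he; have [N2 H2] := h2 e he.
have -> : l - l' = (u (maxn N1 N2) - l') - (u (maxn N1 N2) - l) by ring.
apply: absD_lt; rewrite ?absN; [apply: H2|apply: H1]; by rewrite ?leq_maxl ?leq_maxr.
Qed.

Variable q : K.
Hypothesis Hq : abs (1 - q) < 1.

Lemma absq : abs q = 1.
Proof. have -> : q = 1 + - (1 - q) by ring. by rewrite abs_strict ?absN abs1. Qed.

Lemma q_neq0 : q != 0.
Proof. apply/eqP => e; have := absq; rewrite e (proj2 (eq0 0) erefl) => /eqP; by rewrite eq_sym oner_eq0. Qed.

Lemma absqz (m : int) : abs (q ^ m) = 1.
Proof. exact: absz1_abs absq. Qed.

Lemma qz_close (m : int) : abs (q ^ m - 1) < 1.
Proof. apply: le_lt_trans (absz1_powz _ absq) _; by rewrite absB. Qed.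

Lemma abs_1pqz (m : int) : abs (1 + q ^ m) = 1.
Proof.
have -> : 1 + q ^ m = 2 + (q ^ m - 1) by ring.
by rewrite abs_strict abs2 // qz_close.
Qed.

Lemma onepqz_neq0 (m : int) : 1 + q ^ m != 0.
Proof. apply/eqP => e; have := abs_1pqz m; rewrite e (proj2 (eq0 0) erefl) => /eqP; by rewrite eq_sym oner_eq0. Qed.

Lemma near_pow e : 0 < e -> exists2 d, 0 < d &
  forall a b : int, abs ((a - b)%:~R) < d -> abs (q ^ a - q ^ b) < e.
Proof.
move=> he; have qc : abs (q - 1) < 1 by rewrite absB.
have [M hM] := pow_small absq qc he.
exists (abs (p%:R) ^+ M); first by rewrite exprn_gt0 // absp_gt0.
move=> a b hab; have /dvdzP [k ek] := small_div hab.
have -> : q ^ a = q ^ b * q ^ (a - b) by rewrite -expfzDr ?q_neq0 // addrC subrK.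
rewrite -{2}[q ^ b]mulr1 -mulrBr absM absqz mul1r ek mulrC -exprz_exp.
rewrite -PoszX' -exprnP.
apply: le_lt_trans (absz1_powz _ _) _; first by rewrite absX absq expr1n.
exact: hM.
Qed.

Hypothesis compl : forall u : nat -> K, cauchyK abs u -> exists l, cvgK abs u l.

Lemma qpow_ex A : in_Zp abs A -> exists y, is_qpow abs q A y.
Proof.
move=> [u hu].
have cau : cauchyK abs (fun k => q ^ u k).
  move=> e he; have [d d0 hd] := near_pow he.
  have [N hN] := hu d d0; exists N => m n hm hn; apply: hd.
  have -> : (u m - u n)%:~R = ((u m)%:~R - A) - ((u n)%:~R - A) :> K.
    by rewrite intrD intrN; ring.
  by apply: absD_lt; rewrite ?absN; [apply: hN|apply: hN].
have [y hy] := compl cau; exists y => v hv e he.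
have [d d0 hd] := near_pow he.
have [N1 H1] := hu d d0; have [N2 H2] := hv d d0; have [N3 H3] := hy e he.
exists (maxn N1 (maxn N2 N3)) => n hn.
rewrite !geq_max in hn; case/and3P: hn => h1 h2 h3.
have -> : q ^ v n - y = (q ^ v n - q ^ u n) + (q ^ u n - y) by ring.
apply: absD_lt; last exact: H3.
apply: hd.
have -> : (v n - u n)%:~R = ((v n)%:~R - A) - ((u n)%:~R - A) :> K.
  by rewrite intrD intrN; ring.
by apply: absD_lt; rewrite ?absN; [apply: H2|apply: H1].
Qed.

Lemma qpow_spec A : in_Zp abs A -> is_qpow abs q A (qpow abs q A).
Proof. move=> h; rewrite /qpow; apply: epsilon_spec; exact: qpow_ex. Qed.

Lemma qpow_shift A (m : int) : in_Zp abs A ->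
  qpow abs q (A + m%:~R) = qpow abs q A * q ^ m.
Proof.
move=> hA; have [u hu] := hA.
have hA' : in_Zp abs (A + m%:~R).
  exists (fun k => u k + m) => e he; have [N hN] := hu e he; exists N => n hn.
  by rewrite intrD opprD addrACA subrr addr0; apply: hN.
have hu' : cvgK abs (fun k => (u k + m)%:~R) (A + m%:~R) by case: hA' => v _;
  move=> e he; have [N hN] := hu e he; exists N => n hn;
  rewrite intrD opprD addrACA subrr addr0; apply: hN.
have c1 := qpow_spec hA' hu'.
have c2 : cvgK abs (fun k => q ^ (u k + m)) (qpow abs q A * q ^ m).
  move=> e he; have [N hN] := (qpow_spec hA) u hu e he; exists N => n hn.
  by rewrite expfzDr ?q_neq0 // -mulrBl absM absqz mulr1; apply: hN.
exact: cvgK_unique c1 c2.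
Qed.

Lemma qpow0 : qpow abs q 0 = 1.
Proof.
have h0 : in_Zp abs (0 : K) by exists (fun _ => 0) => e he; exists 0%N => n _; rewrite subrr (proj2 (eq0 0) erefl).
have hc : cvgK abs (fun _ : nat => (0:int)%:~R) (0:K) by move=> e he; exists 0%N => n _; rewrite subrr (proj2 (eq0 0) erefl).
have c1 := qpow_spec h0 hc.
have c2 : cvgK abs (fun k => q ^ ((fun _ : nat => (0:int)) k)) 1 by move=> e he; exists 0%N => n _; rewrite expr0z subrr (proj2 (eq0 0) erefl).
exact: cvgK_unique c1 c2.
Qed.

Lemma qpow_int (m : int) : qpow abs q m%:~R = q ^ m.
Proof.
have h0 : in_Zp abs (0 : K) by exists (fun _ => 0) => e he; exists 0%N => n _; rewrite subrr (proj2 (eq0 0) erefl).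
by rewrite -[m%:~R]add0r qpow_shift // qpow0 mul1r.
Qed.

Definition Iq (a : int) : K := 2 / (1 + q ^ a).

Lemma geom_sum (z : K) M : (1 - z) * \sum_(y < M) z ^+ y = 1 - z ^+ M.
Proof.
elim: M => [|M IH]; first by rewrite big_ord0 mulr0 expr0 subrr.
by rewrite big_ord_recr /= mulrDr IH exprS; ring.
Qed.

Lemma fint_exp (a : int) :
  cvgK abs (fun N => \sum_(y < p ^ N) q ^ (a * (y:int)) * (-1) ^+ y) (Iq a).
Proof.
set z := q ^ a.
have nz : 1 + z != 0 by exact: onepqz_neq0.
have E : forall N, \sum_(y < p ^ N) q ^ (a * (y:int)) * (-1) ^+ y
                   = (1 + z ^+ (p ^ N)) / (1 + z).
  move=> N.
  have nz1 : forall y, (-z)^+y = (-1)^+y * z^+y by move=> y; rewrite -exprMn mulN1r.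
  have -> : \sum_(y < p ^ N) q ^ (a * (y:int)) * (-1) ^+ y = \sum_(y < p ^ N) (- z) ^+ y.
    apply: eq_bigr => y _; by rewrite -exprz_exp -exprnP nz1 mulrC.
  apply: (mulfI nz); rewrite [RHS]mulrC divfK //.
  have -> : 1 + z = 1 - - z by rewrite opprK.
  rewrite geom_sum nz1 -signr_odd oddX podd orbT expr1; ring.
move=> e he.
have [N hN] := pow_small (absqz a) (qz_close a) he.
exists N => n hn; rewrite E /Iq.
have -> : (1 + z ^+ (p ^ n)) / (1 + z) - 2 / (1 + z) = (z ^+ (p ^ n) - 1) / (1 + z).
  by rewrite -mulrBl; congr (_ * _); ring.
by rewrite absM absV // abs_1pqz invr1 mulr1; apply: hN.
Qed.

Lemma cvgK_scal c u l : cvgK abs u l -> cvgK abs (fun N => c * u N) (c * l).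
Proof.
move=> h e he; case: (eqVneq c 0) => [->|cn].
  by exists 0%N => n _; rewrite !mul0r subrr (proj2 (eq0 0) erefl).
have ac : 0 < abs c by rewrite lt_def ge0 andbT; apply/eqP => /eq0 /eqP; rewrite (negbTE cn).
have [N hN] := h (e / abs c) (divr_gt0 he ac); exists N => n hn.
rewrite -mulrBr absM.
have : abs c * abs (u n - l) < abs c * (e / abs c) by rewrite ltr_pM2l //; apply: hN.
by rewrite mulrCA divff ?gt_eqF // mulr1.
Qed.

Lemma cvgK_add u v l m : cvgK abs u l -> cvgK abs v m ->
  cvgK abs (fun N => u N + v N) (l + m).
Proof.
move=> h1 h2 e he; have [N1 H1] := h1 e he; have [N2 H2] := h2 e he.
exists (maxn N1 N2) => n hn; rewrite geq_max in hn; case/andP: hn => a b.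
have -> : u n + v n - (l + m) = (u n - l) + (v n - m) by ring.
by apply: absD_lt; [apply: H1|apply: H2].
Qed.

Lemma cvgK_sum n0 (f : nat -> nat -> K) (l : nat -> K) :
  (forall k, cvgK abs (f k) (l k)) ->
  cvgK abs (fun N => \sum_(k < n0) f k N) (\sum_(k < n0) l k).
Proof.
move=> h; elim: n0 => [|n0 IH].
  by move=> e he; exists 0%N => n _; rewrite !big_ord0 subrr (proj2 (eq0 0) erefl).
have h2 := cvgK_add IH (h n0).
move=> e he; have [N hN] := h2 e he; exists N => n hn; rewrite !big_ord_recr /=; exact: hN.
Qed.

Lemma fint_sum n0 (d : nat -> K) (b : nat -> int) :
  fint abs p (fun y => \sum_(k < n0) d k * q ^ (b k * (y:int)))
  = \sum_(k < n0) d k * Iq (b k).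
Proof.
have hc : cvgK abs (fun N => \sum_(y < p ^ N) (\sum_(k < n0) d k * q ^ (b k * (y:int))) * (-1) ^+ y)
              (\sum_(k < n0) d k * Iq (b k)).
  have h := @cvgK_sum n0 (fun k N => d k * \sum_(y < p ^ N) q ^ (b k * (y:int)) * (-1) ^+ y)
                     (fun k => d k * Iq (b k)) (fun k => cvgK_scal (d k) (fint_exp (b k))).
  move=> e he; have [N hN] := h e he; exists N => n hn.
  have <- : \sum_(k < n0) d k * \sum_(y < p ^ n) q ^ (b k * (y:int)) * (-1) ^+ y
     = \sum_(y < p ^ n) (\sum_(k < n0) d k * q ^ (b k * (y:int))) * (-1) ^+ y.
    transitivity (\sum_(k < n0) \sum_(y < p ^ n) d k * (q ^ (b k * (y:int)) * (-1) ^+ y)).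
      by apply: eq_bigr => k _; rewrite mulr_sumr.
    rewrite exchange_big /=; apply: eq_bigr => y _; rewrite mulr_suml.
    apply: eq_bigr => k _; by rewrite mulrA.
  exact: hN.
have hs : cvgK abs (fun N => \sum_(y < p ^ N) (\sum_(k < n0) d k * q ^ (b k * (y:int))) * (-1) ^+ y)
           (fint abs p (fun y => \sum_(k < n0) d k * q ^ (b k * (y:int)))).
  rewrite /fint; apply: epsilon_spec; by exists (\sum_(k < n0) d k * Iq (b k)).
exact: cvgK_unique hs hc.
Qed.

Lemma fintn_prod r : forall n0 (c : nat -> K) (a : nat -> nat -> int),
  fintn abs p r (fun ys => \sum_(k < n0) c k * \prod_(i < r) q ^ (a k i * ((ys i : nat):int)))
  = \sum_(k < n0) c k * \prod_(i < r) Iq (a k i).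
Proof.
elim: r => [|r IH] n0 c a.
  by rewrite /=; apply: eq_bigr => k _; rewrite !big_ord0.
rewrite /=.
have E : forall y : nat,
   fintn abs p r (fun ys => \sum_(k < n0) c k * \prod_(i < r.+1)
       q ^ (a k i * (((if (i : nat) == r then y else ys i) : nat) : int)))
   = \sum_(k < n0) (c k * \prod_(i < r) Iq (a k i)) * q ^ (a k r * (y:int)).
  move=> y.
  have -> : (fun ys : nat -> nat => \sum_(k < n0) c k * \prod_(i < r.+1)
       q ^ (a k i * (((if (i : nat) == r then y else ys i) : nat) : int)))
     = (fun ys => \sum_(k < n0) (c k * q ^ (a k r * (y:int))) * \prod_(i < r) q ^ (a k i * ((ys i : nat):int))).
    apply: functional_extensionality => ys; apply: eq_bigr => k _.
    rewrite big_ord_recr /=.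
    under eq_bigr => i _ do rewrite (ltn_eqF (ltn_ord i)).
    by rewrite eqxx mulrA mulrAC.
  rewrite (IH n0 (fun k => c k * q ^ (a k r * (y:int))) a); apply: eq_bigr => k _; by rewrite mulrAC.
rewrite (functional_extensionality _ _ E) (fint_sum n0 (fun k => c k * \prod_(i < r) Iq (a k i)) (fun k => a k r)).
by apply: eq_bigr => k _; rewrite big_ord_recr /= mulrA.
Qed.

Lemma expq_sum r (F : 'I_r -> int) : q ^ (\sum_(i < r) F i) = \prod_(i < r) q ^ (F i).
Proof.
apply: (big_morph (fun m : int => q ^ m)) => [m1 m2|]; last exact: expr0z.
exact: expfzDr q_neq0.
Qed.

Lemma Posz_sum r (F : 'I_r -> nat) : ((\sum_(i < r) F i)%N : int) = \sum_(i < r) (F i : int).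
Proof. by apply: (big_morph Posz) => // m1 m2; rewrite PoszD. Qed.

Definition G (w w' : nat) (b : int) : K :=
  (\sum_(t < w) (-1) ^+ t * q ^ ((w':int) * b * (t:int))) * Iq ((w:int) * b).

Lemma G_eq w w' b : odd w ->
  G w w' b = 2 * (1 + q ^ ((w:int) * (w':int) * b)) / ((1 + q ^ ((w':int) * b)) * (1 + q ^ ((w:int) * b))).
Proof.
move=> ow; rewrite /G /Iq.
set z := q ^ ((w':int) * b).
have nz : 1 + z != 0 by exact: onepqz_neq0.
have nz2 : 1 + q ^ ((w:int) * b) != 0 by exact: onepqz_neq0.
have -> : \sum_(t < w) (-1) ^+ t * q ^ ((w':int) * b * (t:int)) = (1 + z ^+ w) / (1 + z).
  have nz1 : forall y, (-z)^+y = (-1)^+y * z^+y by move=> y; rewrite -exprMn mulN1r.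
  have -> : \sum_(t < w) (-1) ^+ t * q ^ ((w':int) * b * (t:int)) = \sum_(t < w) (- z) ^+ t.
    apply: eq_bigr => t _; by rewrite -exprz_exp -exprnP nz1.
  apply: (mulfI nz); rewrite [RHS]mulrC divfK //.
  have -> : 1 + z = 1 - - z by rewrite opprK.
  rewrite geom_sum nz1 -signr_odd ow expr1; ring.
have -> : z ^+ w = q ^ ((w:int) * (w':int) * b).
  by rewrite /z exprnP exprz_exp; congr (q ^ _); ring.
by field; apply/andP.
Qed.

Lemma G_sym w w' b : odd w -> odd w' -> G w w' b = G w' w b.
Proof.
move=> o1 o2; rewrite !G_eq //.
have -> : (w':int) * (w:int) * b = (w:int) * (w':int) * b by ring.
by rewrite [(1 + q ^ ((w':int) * b)) * _]mulrC.
Qed.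

Lemma alg_expand n (P Y Z : K) :
  P * ((1 - Y * Z) / (1 - q)) ^+ n / (n`!)%:R
  = \sum_(k < n.+1) ('C(n, k)%:R * (- Y) ^+ k / ((1 - q) ^+ n * (n`!)%:R)) * (P * Z ^+ k).
Proof.
rewrite expr_div_n (addrC 1) -mulNr exprD1n !mulr_suml mulr_sumr mulr_suml.
apply: eq_bigr => k _.
rewrite exprMn -mulr_natr invfM; ring.
Qed.

Lemma integrand_eq (w w' n : nat) (h : int) (r : nat) (x : K) (j : {ffun 'I_r -> 'I_w})
   (ys : nat -> nat) :
  odd w -> q ^+ w != 1 -> in_Zp abs x ->
  qpow abs q (w%:R * (\sum_(i < r) (h - (i.+1 : int))%:~R * (ys i)%:R))
         * (qnum abs q (w%:R) *
            qnumw abs q w (w'%:R * x + (w'%:R / w%:R) * (\sum_(i < r) ((j i : nat)%:R))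
                           + (\sum_(i < r) (ys i)%:R))) ^+ n
         / (n`!)%:R
  = \sum_(k < n.+1) ('C(n, k)%:R * (- (qpow abs q ((w * w')%:R * x) * q ^+ (w' * (\sum_(i < r) (j i : nat))%N))) ^+ k
                    / ((1 - q) ^+ n * (n`!)%:R))
     * \prod_(i < r) q ^ ((w:int) * (h - (i.+1:int) + (k:int)) * ((ys i : nat):int)).
Proof.
move=> ow qw1 hx.
set X := qpow abs q ((w * w')%:R * x).
set J := (\sum_(i < r) (j i : nat))%N.
set S := (\sum_(i < r) ys i)%N.
have hX : in_Zp abs ((w * w')%:R * x).
  case: hx => u hu; exists (fun k => (w * w')%:Z * u k) => e he.
  have [N hN] := hu e he; exists N => m hm.
  rewrite (intrM K (Posz (w*w')) (u m)) -mulrBr absM; apply: le_lt_trans (hN m hm).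
  by rewrite ler_piMl ?ge0 // abs_natr.
have wnz : (w%:R : K) != 0 by rewrite natr_neq0; case: (w) ow.
have q1 : 1 - q != 0.
  by apply: contraNneq qw1 => /eqP; rewrite subr_eq0 => /eqP <-; rewrite expr1n.
have qw : 1 - q ^+ w != 0 by rewrite subr_eq0 eq_sym.
set E1 := \sum_(i < r) (w:int) * (h - (i.+1 : int)) * ((ys i : nat) : int).
have H1 : qpow abs q (w%:R * (\sum_(i < r) (h - (i.+1 : int))%:~R * (ys i)%:R)) = q ^ E1.
  rewrite -qpow_int /E1 rmorph_sum mulr_sumr; congr (qpow abs q _).
  apply: eq_bigr => i _; by rewrite !rmorphM /= mulrA.
have H2 : qnum abs q w%:R = (1 - q ^+ w) / (1 - q).
  by rewrite /qnum -[w%:R]/((w:int)%:~R) qpow_int -exprnP.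
have H3 : qnumw abs q w (w'%:R * x + (w'%:R / w%:R) * (\sum_(i < r) ((j i : nat)%:R))
                           + (\sum_(i < r) (ys i)%:R))
          = (1 - X * q ^+ (w' * J) * q ^+ (w * S)) / (1 - q ^+ w).
  rewrite /qnumw -!natr_sum.
  have -> : w%:R * (w'%:R * x + w'%:R / w%:R * J%:R + S%:R)
            = (w * w')%:R * x + ((Posz (w' * J + w * S)%N)%:~R : K).
    rewrite -pmulrn natrD !natrM; field; exact: wnz.
  by rewrite qpow_shift // -exprnP exprD mulrA.
rewrite H1 H2 H3.
have -> : (1 - q ^+ w) / (1 - q) * ((1 - X * q ^+ (w' * J) * q ^+ (w * S)) / (1 - q ^+ w))
          = (1 - X * q ^+ (w' * J) * q ^+ (w * S)) / (1 - q).
  by field; rewrite q1 qw.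
rewrite alg_expand; apply: eq_bigr => k _; congr (_ * _).
rewrite -exprM exprnP -expfzDr ?q_neq0 // -expq_sum; congr (q ^ _).
rewrite /E1 /S PoszM PoszM Posz_sum mulr_sumr mulr_suml -big_split /=.
apply: eq_bigr => i _; ring.
Qed.

Lemma side_formula (n : nat) (h : int) (r w w' : nat) (x : K) :
  odd w -> q ^+ w != 1 -> in_Zp abs x ->
  side_coef abs p q h r w w' x n =
  \sum_(k < n.+1) ('C(n, k)%:R * (- qpow abs q ((w * w')%:R * x)) ^+ k / ((1 - q) ^+ n * (n`!)%:R))
     * \prod_(i < r) G w w' (h - (i.+1 : int) + (k : int)).
Proof.
move=> ow qw1 hx; rewrite /side_coef.
set X := qpow abs q ((w * w')%:R * x).
set B := fun k : nat => 'C(n, k)%:R * (- X) ^+ k / ((1 - q) ^+ n * (n`!)%:R).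
set F := fun (k i t : nat) => (-1) ^+ t * q ^ ((w':int) * (h - (i.+1:int) + (k:int)) * (t:int))
           * Iq ((w:int) * (h - (i.+1:int) + (k:int))).
transitivity (\sum_(j : {ffun 'I_r -> 'I_w}) \sum_(k < n.+1) B k * \prod_(i < r) F k i (j i)).
  apply: eq_bigr => j _.
  rewrite (functional_extensionality _ _ (fun ys => @integrand_eq w w' n h r x j ys ow qw1 hx)).
  set J := (\sum_(i < r) (j i : nat))%N.
  rewrite (fintn_prod r n.+1 (fun k : nat => 'C(n, k)%:R * (- (X * q ^+ (w' * J))) ^+ k
                    / ((1 - q) ^+ n * (n`!)%:R)) (fun k i : nat => (w:int) * (h - (i.+1:int) + (k:int)))).
  rewrite mulr_sumr; apply: eq_bigr => k _.
  rewrite /B /F !big_split /= -expr_sum -expq_sum.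
  have hB : q ^ ((w':int) * (\sum_(i < r) (h - (i.+1 : int)) * (j i : int))) * (q ^+ (w' * J)) ^+ k
            = q ^ (\sum_(i < r) (w':int) * (h - (i.+1:int) + (k:int)) * ((j i : nat) : int)).
    rewrite -exprM exprnP -expfzDr ?q_neq0 //; congr (q ^ _).
    rewrite /J !PoszM Posz_sum !mulr_sumr !mulr_suml -big_split /=.
    apply: eq_bigr => i _; ring.
  rewrite -hB -mulNr exprMn; ring.
rewrite exchange_big /=; apply: eq_bigr => k _; rewrite -mulr_sumr; congr (_ * _).
rewrite -(bigA_distr_bigA (fun (i : 'I_r) (t : 'I_w) => F k i t)).
apply: eq_bigr => i _; rewrite /G /F -mulr_suml.
by congr (_ * _); apply: eq_bigr => t _.
Qed.

End Basics.

Theorem theorem1 (R : realType) (K : fieldType) (abs : K -> R) (p : nat)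
    (Hp : prime p) (Hpodd : odd p) (Habs : padic_abs abs p)
    (q : K) (Hq : abs (1 - q) < 1)
    (h : int) (r w1 w2 : nat) (Hw1 : odd w1) (Hw2 : odd w2)
    (Hqw1 : q ^+ w1 != 1) (Hqw2 : q ^+ w2 != 1)
    (x : K) (Hx : in_Zp abs x) :
  forall n : nat,
    side_coef abs p q h r w1 w2 x n = side_coef abs p q h r w2 w1 x n.
Proof.
move=> n.
case: Habs => Hch [ge0 [eq0 [absM [absD [absp compl]]]]].
rewrite (side_formula ge0 eq0 absM absD Hp Hpodd Hch absp Hq compl n h r w2 Hw1 Hqw1 Hx).
rewrite (side_formula ge0 eq0 absM absD Hp Hpodd Hch absp Hq compl n h r w1 Hw2 Hqw2 Hx).
rewrite mulnC; apply: eq_bigr => k _; congr (_ * _); apply: eq_bigr => i _.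
apply: G_sym. all: try done. exact: Hp. exact: Hpodd. exact: absp.
Qed.
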